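(* Let $H$ be a connected graph that is isomorphic neither to $K_4$ nor to the diamond. Then any two distinct strong triangles of $H$ are edge-disjoint.
   Context: A triangle $T$ of $H$ is strong if every maximal matching of $H$ contains an edge of $T$. The diamond is the graph with vertices $a,b,c,d$ and edges $ab,ac,bc,bd,cd$. *)

(* Defs.v *)
From mathcomp Require Import all_boot.
Set Implicit Arguments. Unset Strict Implicit. Unset Printing Implicit Defensive.

Definition simple_graph (V : finType) (e : rel V) : Prop :=
  symmetric e /\ irreflexive e.

Definition is_edge (V : finType) (e : rel V) (f : {set V}) : bool :=
  [exists x, exists y, e x y && (f == [set x; y])].

Definition matching (V : finType) (e : rel V) (M : {set {set V}}) : bool :=
  [forall f in M, is_edge e f] &&
  [forall f in M, forall g in M, (f != g) ==> [disjoint f & g]].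

Definition maximal_matching (V : finType) (e : rel V) (M : {set {set V}}) : bool :=
  matching e M && [forall N : {set {set V}}, (matching e N && (M \subset N)) ==> (N == M)].

Definition triangle (V : finType) (e : rel V) (T : {set V}) : bool :=
  [exists x, exists y, exists z,
     [&& e x y, e y z, e x z & T == [set x; y; z]]].

(* The edges of a triangle T are the edges f with f \subset T. *)
Definition strong_triangle (V : finType) (e : rel V) (T : {set V}) : Prop :=
  triangle e T /\
  forall M : {set {set V}}, maximal_matching e M ->
    exists2 f, f \in M & f \subset T.

(* Two triangles are edge-disjoint iff they share no edge, i.e. at most one vertex. *)
Definition edge_disjoint (V : finType) (e : rel V) (T1 T2 : {set V}) : Prop :=
  forall f, is_edge e f -> ~ (f \subset T1 /\ f \subset T2).

Definition connected_graph (V : finType) (e : rel V) : Prop :=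
  forall x y : V, connect e x y.

Definition graph_iso (V W : finType) (e : rel V) (e' : rel W) : Prop :=
  exists f : V -> W, bijective f /\ forall x y, e' (f x) (f y) = e x y.

Definition K4_rel : rel 'I_4 := fun x y => x != y.

(* diamond on a=0,b=1,c=2,d=3 with edges ab,ac,bc,bd,cd (only ad missing) *)
Definition diamond_rel : rel 'I_4 := fun x y =>
  (x != y) && ~~ (((val x == 0) && (val y == 3)) || ((val x == 3) && (val y == 0))).

(* Main.v *)
Require Import Defs.
From mathcomp Require Import all_boot.
Set Implicit Arguments. Unset Strict Implicit. Unset Printing Implicit Defensive.

Section G.
Variables (V : finType) (e : rel V).
Hypothesis (He : simple_graph e).

Lemma esym x y : e x y = e y x. Proof. by case: He => s _; apply: s. Qed.
Lemma eneq x y : e x y -> x != y.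
Proof. case: He => _ i; apply: contraTneq => ->; by rewrite i. Qed.

Lemma edge_card f : is_edge e f -> #|f| = 2.
Proof.
case/existsP=> x /existsP [y /andP [exy /eqP ->]].
by rewrite cards2 (eneq exy).
Qed.

Lemma in3 (x y z u : V) : u \in [set x; y; z] -> [\/ u = x, u = y | u = z].
Proof. by rewrite !inE => /orP[/orP[]|] /eqP ->; [constructor 1|constructor 2|constructor 3]. Qed.

Lemma tri_adj T u v : triangle e T -> u \in T -> v \in T -> u != v -> e u v.
Proof.
case/existsP=> x /existsP [y /existsP [z /and4P [xy yz xz /eqP ->]]].
move=> /in3 [] -> /in3 [] -> //; rewrite ?eqxx //;
  rewrite ?(esym y x) ?(esym z x) ?(esym z y) //.
Qed.

Lemma tri_card T : triangle e T -> #|T| = 3.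
Proof.
case/existsP=> x /existsP [y /existsP [z /and4P [xy yz xz /eqP ->]]].
rewrite setUC cardsU1 cards2 (eneq xy) !inE negb_or eq_sym (eneq xz) eq_sym (eneq yz).
by [].
Qed.

Lemma extend M0 : matching e M0 -> exists M, maximal_matching e M /\ M0 \subset M.
Proof.
move=> HM0.
pose P := fun N : {set {set V}} => matching e N && (M0 \subset N).
have P0 : P M0 by rewrite /P HM0 subxx.
case: (@arg_maxnP _ M0 P (fun N : {set {set V}} => #|N|) P0) => N /andP [mN sN] Nmax.
exists N; split => //.
rewrite /maximal_matching mN /=; apply/forallP => N'; apply/implyP => /andP [mN' sN'].
rewrite eq_sym eqEcard sN' /=; apply: Nmax.
by rewrite /P mN' (subset_trans sN sN').
Qed.

Lemma matching2 u1 v1 u2 v2 : e u1 v1 -> e u2 v2 ->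
  u1 != u2 -> u1 != v2 -> v1 != u2 -> v1 != v2 ->
  matching e [set [set u1; v1]; [set u2; v2]].
Proof.
move=> e1 e2 n1 n2 n3 n4.
have d12 : [disjoint [set u1; v1] & [set u2; v2]].
  rewrite disjoints_subset; apply/subsetP => z; rewrite !inE => /orP[]/eqP ->;
  by rewrite negb_or ?n1 ?n2 ?n3 ?n4.
apply/andP; split.
  apply/forallP => f; apply/implyP; rewrite !inE => /orP[]/eqP ->; apply/existsP.
    by exists u1; apply/existsP; exists v1; rewrite e1 eqxx.
  by exists u2; apply/existsP; exists v2; rewrite e2 eqxx.
apply/forallP => f; apply/implyP; rewrite !inE => /orP[]/eqP ->;
apply/forallP => g; apply/implyP; rewrite !inE => /orP[]/eqP ->;
by rewrite ?eqxx ?d12 ?implybT // disjoint_sym d12 implybT.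
Qed.

Lemma bad T u1 v1 u2 v2 : strong_triangle e T -> e u1 v1 -> e u2 v2 ->
  u1 \notin T -> u2 \notin T -> v1 \in T -> v2 \in T -> u1 != u2 -> v1 != v2 -> False.
Proof.
move=> [tT sT] e1 e2 u1T u2T v1T v2T n1 n4.
have n2 : u1 != v2 by apply: contraNneq u1T => ->.
have n3 : v1 != u2 by apply: contraNneq u2T => <-.
have [M [mM sM]] := extend (matching2 e1 e2 n1 n2 n3 n4).
have [f fM fT] := sT M mM.
case/andP: mM => /andP [/forallP eM /forallP dM] _.
have ef := edge_card (implyP (eM f) fM).
have key : forall u v, [set u; v] \in M -> u \notin T -> v \in f -> False.
  move=> u v uvM uT vf.
  case: (eqVneq f [set u; v]) => [fe | ne].
    by move: uT; rewrite (subsetP fT) // fe !inE eqxx.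
  move: (implyP (dM f) fM) => /forallP /(_ [set u; v]) /implyP /(_ uvM) /implyP /(_ ne) dis.
  by move: (disjointFr dis vf); rewrite !inE eqxx orbT.
have : (v1 \in f) || (v2 \in f).
  rewrite -[_ || _]negbK negb_or; apply/negP => /andP [nv1 nv2].
  have sub : f \subset T :\: [set v1; v2].
    apply/subsetP => z zf; rewrite inE (subsetP fT) // andbT !inE.
    by apply/negP => /orP[]/eqP zv; [move: nv1|move: nv2]; rewrite -zv zf.
  have sv : [set v1; v2] \subset T by apply/subsetP => z; rewrite !inE => /orP[]/eqP ->.
  by move: (subset_leq_card sub); rewrite (cardsDS sv) (tri_card tT) cards2 n4 ef.
have m1 : [set u1; v1] \in M by apply: (subsetP sM); rewrite !inE eqxx.
have m2 : [set u2; v2] \in M by apply: (subsetP sM); rewrite !inE eqxx orbT.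
by case/orP => [/(key u1 v1 m1 u1T)|/(key u2 v2 m2 u2T)].
Qed.

Lemma card3 (x y z : V) : x != y -> x != z -> y != z -> #|[set x; y; z]| = 3.
Proof.
move=> xy xz yz.
by rewrite setUC cardsU1 cards2 xy !inE negb_or eq_sym xz eq_sym yz.
Qed.

Lemma decomp T p q : triangle e T -> p \in T -> q \in T -> p != q ->
  exists a, [/\ a != p, a != q & T = [set p; q; a]].
Proof.
move=> tT pT qT pq.
have sv : [set p; q] \subset T by apply/subsetP => z; rewrite !inE => /orP[]/eqP ->.
have : T :\: [set p; q] != set0.
  by rewrite -card_gt0 (cardsDS sv) (tri_card tT) cards2 pq.
case/set0Pn => a; rewrite !inE negb_or => /andP [/andP [ap aq] aT].
exists a; split => //; apply/eqP; rewrite eq_sym eqEcard (tri_card tT).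
rewrite card3 // 1?eq_sym // andbT.
by apply/subsetP => z /in3 [] ->.
Qed.

Lemma cross (S : {set V}) v p : connect e v p -> v \notin S -> p \in S ->
  exists w z, [/\ w \notin S, z \in S & e w z].
Proof.
case/connectP => s; elim: s v => [|x s IH] v /=.
  by move=> _ -> vS pS; rewrite pS in vS.
case/andP => evx px pl vS pS.
case: (boolP (x \in S)) => xS; first by exists v, x.
exact: IH px pl xS pS.
Qed.

Lemma in4 (x y z t u : V) : u \in [set x; y; z; t] -> [\/ u = x, u = y, u = z | u = t].
Proof. by rewrite !inE => /orP[/orP[/orP[]|]|] /eqP ->; [constructor 1|constructor 2|constructor 3|constructor 4]. Qed.
End G.

Theorem mainTheorem16 (V : finType) (e : rel V) :
  simple_graph e ->
  connected_graph e ->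
  ~ graph_iso e K4_rel ->
  ~ graph_iso e diamond_rel ->
  forall T1 T2 : {set V},
    strong_triangle e T1 -> strong_triangle e T2 -> T1 != T2 ->
    edge_disjoint e T1 T2.
Proof.
move=> He Hc HK HD T1 T2 s1 s2 n12 f ef [f1 f2].
case/existsP: ef => p /existsP [q /andP [epq /eqP fe]]; subst f.
have pq := eneq He epq.
have pT1 : p \in T1 by rewrite (subsetP f1) // !inE eqxx.
have qT1 : q \in T1 by rewrite (subsetP f1) // !inE eqxx orbT.
have pT2 : p \in T2 by rewrite (subsetP f2) // !inE eqxx.
have qT2 : q \in T2 by rewrite (subsetP f2) // !inE eqxx orbT.
have [a [ap aq T1e]] := decomp He s1.1 pT1 qT1 pq.
have [d [dp dq T2e]] := decomp He s2.1 pT2 qT2 pq.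
have ad : a != d by apply: contraNneq n12 => ad; rewrite T1e T2e ad.
have adj : forall T u v, strong_triangle e T -> u \in T -> v \in T -> u != v -> e u v.
  by move=> T u v [tT _]; apply: tri_adj.
have eap : e a p by apply: (adj T1) => //; rewrite T1e !inE eqxx ?orbT.
have eaq : e a q by apply: (adj T1) => //; rewrite T1e !inE eqxx ?orbT.
have edp : e d p by apply: (adj T2) => //; rewrite T2e !inE eqxx ?orbT.
have edq : e d q by apply: (adj T2) => //; rewrite T2e !inE eqxx ?orbT.
have aT1 : a \in T1 by rewrite T1e !inE eqxx ?orbT.
have dT2 : d \in T2 by rewrite T2e !inE eqxx ?orbT.
have dT1 : d \notin T1 by rewrite T1e !inE !negb_or (eq_sym d a) dp dq ad.
have aT2 : a \notin T2 by rewrite T2e !inE !negb_or ap aq ad.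
pose S := [set p; q; a; d].
have allS : forall x, x \in S.
  move=> v; apply/negPn/negP => vS.
  have pS : p \in S by rewrite !inE eqxx.
  have [w [z [wS zS ewz]]] := cross (Hc v p) vS pS.
  have wT1 : w \notin T1.
    by apply: contra wS; rewrite T1e /S !inE => /orP[/orP[]|] ->; rewrite ?orbT.
  have wT2 : w \notin T2.
    by apply: contra wS; rewrite T2e /S !inE => /orP[/orP[]|] ->; rewrite ?orbT.
  have wd : w != d by apply: contraNneq wS => ->; rewrite !inE eqxx orbT.
  have wa : w != a by apply: contraNneq wS => ->; rewrite !inE eqxx !orbT.
  case/in4: zS => ?; subst z.
  - by apply: (bad He s1 ewz edq) => //.
  - by apply: (bad He s1 ewz edp) => //; rewrite eq_sym.
  - by apply: (bad He s1 ewz edp) => //.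
  - by apply: (bad He s2 ewz eap) => //.
have irr : forall x, e x x = false by case: He => _ i x; apply: i.
have eqp : e q p by rewrite esym.
have epa : e p a by rewrite esym.
have eqa : e q a by rewrite esym.
have epd : e p d by rewrite esym.
have eqd : e q d by rewrite esym.
have eda : e d a = e a d by rewrite esym.
have pa : (p == a) = false by rewrite eq_sym (negbTE ap).
have qa : (q == a) = false by rewrite eq_sym (negbTE aq).
have da : (d == a) = false by rewrite eq_sym (negbTE ad).
have qp : (q == p) = false by rewrite eq_sym (negbTE pq).
have dp' : (d == p) = false by rewrite (negbTE dp).
have dq' : (d == q) = false by rewrite (negbTE dq).
pose g (x : V) : 'I_4 := if x == a then @Ordinal 4 0 isT else if x == p then @Ordinal 4 1 isT
  else if x == q then @Ordinal 4 2 isT else @Ordinal 4 3 isT.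
pose h (i : 'I_4) : V := match val i with 0 => a | 1 => p | 2 => q | _ => d end.
have gh : cancel g h.
  by move=> x; case/in4: (allS x) => ->; rewrite /g ?eqxx ?pa ?qa ?da ?qp ?dp' ?dq'.
have hg : cancel h g.
  case=> [[|[|[|[|n]]]] Hi] //; apply: val_inj; rewrite /h /g /= ?eqxx ?pa ?qa ?da ?qp ?dp' ?dq' //.
have isoR : forall x y, (if e a d then K4_rel else diamond_rel) (g x) (g y) = e x y.
  move=> x y; case/in4: (allS x) => ->; case/in4: (allS y) => ->;
  rewrite /g ?eqxx ?pa ?qa ?da ?qp ?dp' ?dq' ?irr ?epq ?eqp ?epa ?eqa ?epd ?eqd ?eap ?eaq ?edp ?edq ?eda;
  by case: (e a d).
case E: (e a d); [apply: HK | apply: HD]; exists g; (split; first by exists h);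
  by move=> x y; rewrite -isoR E.
Qed.
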